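(* Let $X\sim\zeta$ be a random variable on a measurable space $\mathcal{X}$, let $\hat{\mathcal{X}}$ be a measurable space and $d:\mathcal{X}\times\hat{\mathcal{X}}\to\mathbb{R}$ a measurable distortion function. Let $\eta$ be a probability distribution on $\mathcal{X}$ (possibly different from $\zeta$), let $b\in(0,\infty]$ and define for $\lambda\in(-b,0]$ \[ \phi(\lambda)=\sup_{\hat x\in\hat{\mathcal{X}}}\log\mathbb{E}_{X\sim\eta}\big[e^{\lambda d(X,\hat x)}\big]. \] Then for every $r\ge 0$, \[ \inf_{P_{\hat X|X}:\ I(\hat X;X)\le r}\mathbb{E}\big[d(X,\hat X)\big]\ \ge\ \sup_{-b<\lambda<0}\left\{\frac1\lambda\big[r+D(\zeta\|\eta)\big]+\frac1\lambda\phi(\lambda)\right\}, \] where the infimum is over Markov kernels $P_{\hat X|X}$ from $\mathcal{X}$ to $\hat{\mathcal{X}}$ with $X\sim\zeta$.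
   Context: $D(\cdot\|\cdot)$ is the Kullback–Leibler divergence and $I(\cdot;\cdot)$ mutual information. Expectations $\mathbb{E}[d(X,\hat X)]$ are assumed well defined. *)

(* Defs.v *)
From HB Require Import structures.
From mathcomp Require Import all_boot all_order all_algebra.
From mathcomp Require Import all_classical all_reals all_analysis.
Set Implicit Arguments.
Unset Strict Implicit.
Unset Printing Implicit Defensive.
Import Order.TTheory GRing.Theory Num.Theory.
Local Open Scope classical_set_scope.
Local Open Scope ring_scope.
Local Open Scope ereal_scope.

Section rd_defs.
Context {R : realType}.

Definition eln (x : \bar R) : \bar R :=
  match x with
  | r%:E => if (0 < r)%R then (ln r)%:E else -oo
  | +oo => +oo
  | -oo => -oo
  end.

Definition is_density d (T : measurableType d) (P : set T -> \bar R)
    (Q : {measure set T -> \bar R}) (f : T -> R) : Prop :=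
  [/\ measurable_fun [set: T] f, (forall x, 0 <= f x)%R &
      forall A, measurable A -> P A = \int[Q]_(x in A) (f x)%:E].

(* Kullback-Leibler divergence D(P||Q) = E_Q[(dP/dQ) ln (dP/dQ)]
   = E_P[ln dP/dQ] if P << Q, and +oo otherwise (no density: inf of the
   empty set is +oo).  The value does not depend on the choice of the
   (a.e. unique) density. *)
Definition KL d (T : measurableType d) (P : set T -> \bar R)
    (Q : {measure set T -> \bar R}) : \bar R :=
  ereal_inf [set \int[Q]_x ((f x) * ln (f x))%:E | f in is_density P Q].

Section joint.
Context d1 d2 (X : measurableType d1) (Xh : measurableType d2).
Variables (zeta : probability X R) (K : R.-pker X ~> Xh).

Definition cst_unit : unit -> pprobability X R := fun _ => zeta.
Lemma measurable_cst_unit : measurable_fun setT cst_unit.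
Proof. exact: measurable_cst. Qed.
Definition cst_X : X -> pprobability X R := fun _ => zeta.
Lemma measurable_cst_X : measurable_fun setT cst_X.
Proof. exact: measurable_cst. Qed.

(* joint law P_{X Xh} of (X, Xh) when X ~ zeta and Xh | X ~ K:
   joint A = \int[zeta]_x K x (xsection A x) *)
Definition joint : {measure set (X * Xh) -> \bar R} :=
  mkproduct (kprobability measurable_cst_unit) (kernel.kernel_snd K) tt.

(* the kernel x |-> P_Xh (marginal law of Xh), constant in x *)
Definition marg_kernel := mkcomp_noparam (kprobability measurable_cst_X) K.

(* product P_X (x) P_Xh of the marginals:
   A |-> \int[zeta]_x P_Xh (xsection A x) *)
Definition prod_marg : {measure set (X * Xh) -> \bar R} :=
  mkproduct (kprobability measurable_cst_unit)
    (kernel.kernel_snd marg_kernel) tt.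

Definition mutual_info : \bar R := KL joint prod_marg.

Definition exp_dist (dist : X * Xh -> R) : \bar R :=
  \int[joint]_p (dist p)%:E.

(* E[dist(X, Xh)] is well defined (not of the form +oo - +oo) *)
Definition exp_dist_welldef (dist : X * Xh -> R) : Prop :=
  (\int[joint]_p (Num.max (dist p) 0%R)%:E < +oo) \/
  (\int[joint]_p (Num.max (- dist p) 0%R)%:E < +oo).
End joint.

Definition phi d1 d2 (X : measurableType d1) (Xh : measurableType d2)
    (eta : probability X R) (dist : X * Xh -> R) (lambda : R) : \bar R :=
  ereal_sup [set eln (\int[eta]_x (expR (lambda * dist (x, xh)))%:E)
            | xh in [set: Xh]].

End rd_defs.

(* Main.v *)
Require Import Defs.
From HB Require Import structures.
From mathcomp Require Import all_boot all_order all_algebra.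
From mathcomp Require Import all_classical all_reals all_analysis.
From mathcomp Require Import measurable_realfun.
From mathcomp Require Import ring lra.
Import Order.TTheory GRing.Theory Num.Theory.
Local Open Scope classical_set_scope.
Local Open Scope ring_scope.
Local Open Scope ereal_scope.

Section density.
Context d (T : measurableType d) (R : realType).
Context (mu nu : {measure set T -> \bar R}) (g : T -> R).
Hypothesis mg : measurable_fun setT g.
Hypothesis g0 : forall x, (0 <= g x)%R.
Hypothesis hg : forall A, measurable A -> nu A = \int[mu]_(x in A) (g x)%:E.

Import HBNNSimple.

Lemma density_integral (f : T -> \bar R) : (forall x, 0 <= f x) ->
    measurable_fun setT f ->
  \int[mu]_x (f x * (g x)%:E) = \int[nu]_x f x.
Proof.
move=> f0 mf; set G := fun x => (g x)%:E.
have mG : measurable_fun setT G by exact/measurable_EFinP.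
have G0 x : 0 <= G x by rewrite lee_fin.
pose h := nnsfun_approx measurableT mf.
have -> : \int[nu]_x f x =
    lim (\int[nu]_x (EFin \o h n) x @[n --> \oo]).
  have fE x : f x = lim ((EFin \o h n) x @[n --> \oo]).
    by apply/esym/cvg_lim => //; exact: cvg_nnsfun_approx.
  under eq_integral => x _ do rewrite fE.
  apply: monotone_convergence => //.
  - move=> n; apply/measurable_EFinP.
    by apply: (measurable_funS measurableT) => //; exact/measurable_funP.
  - by move=> n x Ex //=; rewrite lee_fin.
  - by move=> x Ex a b ab; rewrite lee_fin; exact/lefP/nd_nnsfun_approx.
have -> : \int[mu]_x (f x * G x) =
    lim (\int[mu]_x ((EFin \o h n) x * G x) @[n --> \oo]).
  have fg x : f x * G x = lim (((EFin \o h n) \* G) x @[n --> \oo]).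
    by apply/esym/cvg_lim => //; apply: cvgeZr;
      [by []|exact: cvg_nnsfun_approx].
  under eq_integral => x _ do rewrite fg.
  apply: monotone_convergence => [//| | |].
  - move=> n; apply/emeasurable_funM => //.
    exact/measurable_EFinP.
  - by move=> n x Ex /=; rewrite mule_ge0 ?lee_fin.
  - by move=> x Ex a b ab/=; rewrite lee_wpmul2r ?lee_fin//; exact/lefP/nd_nnsfun_approx.
suff suf n : \int[mu]_x ((EFin \o h n) x * G x) =
    \int[nu]_x (EFin \o h n) x.
  by under eq_fun do rewrite suf.
transitivity (\int[nu]_x
   (\sum_(y \in range (h n)) (y * \1_(h n @^-1` [set y]) x)%:E)); last first.
  by apply: eq_integral => t tE; rewrite /= fimfunE -fsumEFin.
have indich m r : measurable_fun setT (fun x => (r * \1_(h m @^-1` [set r]) x)%:E).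
  by apply: (measurable_comp measurableT) => //; exact: measurable_funM.
rewrite ge0_integral_fsum//; last by move=> m y Ey; exact: nnfun_muleindic_ge0.
transitivity (\int[mu]_x (\sum_(y \in range (h n))
    (y * \1_(h n @^-1` [set y]) x)%:E * G x)).
  under [RHS]eq_integral => x xE.
    rewrite -ge0_mule_fsuml => [|y]; last exact: nnfun_muleindic_ge0.
    rewrite fsumEFin // -(fimfunE _ x); over.
  by [].
rewrite ge0_integral_fsum//; last 2 first.
  - by move=> y; apply: emeasurable_funM => //.
  - by move=> m y Ey; rewrite mule_ge0 ?nnfun_muleindic_ge0.
apply: eq_fsbigr => r rhn.
under [RHS]eq_integral do rewrite EFinM.
rewrite integralZl_indic_nnsfun => //.
under eq_integral do rewrite EFinM -muleA.
rewrite ge0_integralZl//.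
- under eq_integral do rewrite muleC.
  rewrite (eq_integral (G \_ (h n @^-1` [set r]))); last first.
    by move=> x xE; rewrite epatch_indic.
  have mhr : measurable (h n @^-1` [set r]).
    by rewrite -[X in measurable X]setTI; exact: measurable_funP.
  by rewrite -integral_mkcondr setTI -hg// integral_indic// setIT.
- apply: emeasurable_funM => //; exact/measurable_EFinP.
- by move=> t Et; rewrite mule_ge0 ?lee_fin.
- by move: rhn; rewrite inE => -[t _ <-]; rewrite lee_fin.
Qed.
End density.

Local Open Scope ring_scope.
Section reals.
Context (R : realType).
Implicit Types a b : R.

Lemma young a b : 0 <= a -> a * b <= a * ln a - a + expR b.
Proof.
move=> a0; have [->|ap] := eqVneq a 0.
  by rewrite !mul0r subr0 add0r ltW// expR_gt0.
have apos : 0 < a by rewrite lt_neqAle eq_sym ap a0.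
have eb : expR b = a * expR (b - ln a).
  by rewrite expRD expRN lnK ?posrE// mulrCA divff ?mulr1// gt_eqF.
rewrite eb.
have := expR_ge1Dx (b - ln a) => h.
have : a * (1 + (b - ln a)) <= a * expR (b - ln a) by rewrite ler_wpM2l.
nra.
Qed.

Lemma xlnx_ge a : 0 <= a -> a - 1 <= a * ln a.
Proof. move=> a0; have := @young a 0 a0; rewrite mulr0 expR0; lra. Qed.

End reals.

Section ealg.
Context (R : realType).
Local Open Scope ereal_scope.

Lemma ealg (a a' b b' l l' E : \bar R) (c cp cn : R) :
  0 <= a -> 0 <= b' -> 0 <= l' -> 0 <= E -> E <= 1 ->
  a' \is a fin_num -> b \is a fin_num -> l \is a fin_num ->
  c = (cp - cn)%R ->
  a + b + 1 + l + cn%:E <= a' + b' + l' + cp%:E + E ->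
  a - a' <= (b' - b) + (l' - l) + c%:E.
Proof.
move=> a0 b'0 l'0 E0 E1 fa' fb fl ->.
have fE : E \is a fin_num.
  by rewrite fin_numE gt_eqF ?(lt_le_trans _ E0)// lt_eqF// (le_lt_trans E1)// ltry.
have E0' : (0 <= fine E)%R by rewrite fine_ge0.
have E1' : (fine E <= 1)%R by rewrite -lee_fin fineK.
rewrite -(fineK fa') -(fineK fb) -(fineK fl) -(fineK fE).
move: (fine a') (fine b) (fine l) (fine E) E0' E1' => ar' br lr Er E0' E1'.
case: b' b'0 => [br'||] //= b'0; case: l' l'0 => [lr'||] //= l'0;
  case: a a0 => [ar||] //= a0; rewrite ?lee_fin.
- by move=> h; lra.
- by move=> _; rewrite [X in _ <= X](_ : _ = +oo) ?leey.
- by move=> _; rewrite [X in _ <= X](_ : _ = +oo) ?leey.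
- by move=> _; rewrite [X in _ <= X](_ : _ = +oo) ?leey.
Qed.
End ealg.

Section pw.
Context (R : realType).
Lemma maxdec (x : R) : x = Num.max x 0 - Num.max (- x) 0.
Proof.
rewrite /Num.max; case: ifPn => h1; case: ifPn => h2; lra.
Qed.

Lemma pw (F uu LL cc : R) : 0 <= F ->
  F * Num.max uu 0 + Num.max (- (F * ln F)) 0 + F + F * Num.max (- LL) 0
    + F * Num.max (- cc) 0 <=
  F * Num.max (- uu) 0 + Num.max (F * ln F) 0 + F * Num.max LL 0
    + F * Num.max cc 0 + expR (uu - cc - LL).
Proof.
move=> F0; have Y := @young R F (uu - cc - LL) F0.
have key : F * (uu - cc - LL) = F * Num.max uu 0 - F * Num.max (- uu) 0
   - F * Num.max cc 0 + F * Num.max (- cc) 0 - F * Num.max LL 0 + F * Num.max (- LL) 0.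
  by rewrite {1}(maxdec uu) {1}(maxdec cc) {1}(maxdec LL); ring.
have kA := maxdec (F * ln F).
rewrite key in Y; lra.
Qed.
End pw.

Local Open Scope ereal_scope.
Section int_sum.
Context d (T : measurableType d) (R : realType) (mu : {measure set T -> \bar R}).

Lemma int2 (a b : T -> R) : measurable_fun setT a -> measurable_fun setT b ->
  (forall x, 0 <= a x)%R -> (forall x, 0 <= b x)%R ->
  \int[mu]_x (a x + b x)%:E = \int[mu]_x (a x)%:E + \int[mu]_x (b x)%:E.
Proof.
move=> ma mb a0 b0; under eq_integral do rewrite EFinD.
by rewrite ge0_integralD//; [move=> x _; rewrite lee_fin|exact/measurable_EFinP
  |move=> x _; rewrite lee_fin|exact/measurable_EFinP].
Qed.

Lemma int5 (a b c e g : T -> R) : measurable_fun setT a -> measurable_fun setT b ->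
  measurable_fun setT c -> measurable_fun setT e -> measurable_fun setT g ->
  (forall x, 0 <= a x)%R -> (forall x, 0 <= b x)%R -> (forall x, 0 <= c x)%R ->
  (forall x, 0 <= e x)%R -> (forall x, 0 <= g x)%R ->
  \int[mu]_x (a x + b x + c x + e x + g x)%:E = \int[mu]_x (a x)%:E +
    \int[mu]_x (b x)%:E + \int[mu]_x (c x)%:E + \int[mu]_x (e x)%:E +
    \int[mu]_x (g x)%:E.
Proof.
move=> ma mb mc me mg a0 b0 c0 e0 g0.
rewrite (int2 (fun x => a x + b x + c x + e x)%R g) //; last 2 first.
  by apply: measurable_funD => //; apply: measurable_funD => //; apply: measurable_funD.
  by move=> x; rewrite !addr_ge0.
rewrite (int2 (fun x => a x + b x + c x)%R e) //; last 2 first.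
  by apply: measurable_funD => //; apply: measurable_funD.
  by move=> x; rewrite !addr_ge0.
rewrite (int2 (fun x => a x + b x)%R c) //; last 2 first.
  by apply: measurable_funD.
  by move=> x; rewrite !addr_ge0.
by rewrite int2.
Qed.
End int_sum.

Section main.
Context (R : realType) d1 d2 (X : measurableType d1) (Xh : measurableType d2).
Context (zeta eta : probability X R) (K : R.-pker X ~> Xh).

Lemma joint_fstE (A : set X) : measurable A ->
  joint zeta K (fst @^-1` A) = zeta A.
Proof.
move=> mA.
rewrite /joint /= /kproduct /= /cst_unit /kernel.intker_indic /kernel.kernel_snd /=.
transitivity (\int[zeta]_y (\1_A y)%:E); last by rewrite integral_indic// setIT.
apply: eq_integral => y _ /=.
rewrite (_ : (fun z => _) = cst (\1_A y)%:E); last first.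
  by apply/funext => z; rewrite /indic /=.
by rewrite integral_cst// prob_kernel mule1.
Qed.

Lemma joint_fst (phi : X -> \bar R) : (forall x, 0 <= phi x) ->
  measurable_fun setT phi ->
  \int[joint zeta K]_p phi p.1 = \int[zeta]_x phi x.
Proof.
move=> phi0 mphi.
rewrite [RHS](eq_measure_integral (pushforward (joint zeta K) fst)); last first.
  by move=> A mA _; rewrite /pushforward /=; exact/esym/joint_fstE.
by rewrite (ge0_integral_pushforward measurable_fst)// preimage_setT.
Qed.

Context (x0 : X).
Definition Pm : set Xh -> \bar R := marg_kernel zeta K x0.
HB.instance Definition _ := Measure.on Pm.
Lemma Pm_le1 : Pm setT <= 1.
Proof. exact: sprob_kernel_le1. Qed.
Lemma finPm : fin_num_fun Pm.
Proof.
move=> A mA; rewrite ge0_fin_numE//.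
by rewrite (le_lt_trans _ (ltry 1))// (le_trans _ Pm_le1)// le_measure// inE.
Qed.
HB.instance Definition _ := Measure_isFinite.Build _ _ _ Pm finPm.

Lemma prod_margE (A : set (X * Xh)) : measurable A ->
  prod_marg zeta K A = (zeta \x Pm) A.
Proof.
move=> mA.
rewrite /prod_marg /= /kproduct /= /cst_unit /kernel.intker_indic /kernel.kernel_snd /=.
rewrite /product_measure1 /=.
apply: eq_integral => y _ /=.
change (\int[Pm]_z (\1_A (y, z))%:E = Pm (xsection A y)).
rewrite (_ : (fun z => _) = fun z => (\1_(xsection A y) z)%:E).
  by rewrite integral_indic ?setIT//; exact: measurable_xsection.
apply/funext => z; rewrite /indic /= /xsection /=.
congr (_%:R%:E); congr (nat_of_bool _); apply/idP/idP.
  by move=> H; apply/mem_set.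
by move/set_mem.
Qed.
End main.
Section more.
Context (R : realType) d1 d2 (X : measurableType d1) (Xh : measurableType d2).
Context (zeta : probability X R) (K : R.-pker X ~> Xh) (x0 : X).
Local Notation Pm := (@Pm _ _ _ _ _ zeta K x0).

Lemma prod_marg_int (F : X * Xh -> \bar R) : measurable_fun setT F ->
  (forall p, 0 <= F p) ->
  \int[prod_marg zeta K]_p F p = \int[zeta]_x \int[Pm]_y F (x, y).
Proof.
move=> mF F0.
rewrite (eq_measure_integral (zeta \x Pm)); last first.
  by move=> A mA _; exact: (@prod_margE _ _ _ _ _ zeta K x0).
by rewrite fubini_tonelli1.
Qed.

Lemma joint_setT : joint zeta K setT = 1.
Proof. by rewrite -(preimage_setT fst) joint_fstE// probability_setT. Qed.

Lemma prod_marg_setT : prod_marg zeta K setT <= 1.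
Proof.
rewrite (@prod_margE _ _ _ _ _ zeta K x0)// -setXTT product_measure1E//.
rewrite [X in X * _](_ : _ = 1); last exact: probability_setT.
by rewrite mul1e; exact: Pm_le1.
Qed.
End more.

Section helpers.
Context (R : realType).
Lemma max0_ge0 (x : R) : (0 <= Num.max x 0)%R.
Proof. by rewrite le_max lexx orbT. Qed.

Lemma mulmax (k a : R) : (0 <= k)%R -> (Num.max a 0 * k = Num.max (k * a) 0)%R.
Proof.
move=> k0; rewrite /Num.max; case: ifPn => h1; case: ifPn => h2; try nra.
Qed.

Lemma int_posneg d (T : measurableType d) (mu : {measure set T -> \bar R}) (h : T -> R) :
  \int[mu]_x (h x)%:E = \int[mu]_x (Num.max (h x) 0)%:E - \int[mu]_x (Num.max (- h x) 0)%:E.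
Proof.
rewrite integralE; congr (_ - _).
  by apply: eq_integral => x _; rewrite (funerpos h).
by apply: eq_integral => x _; rewrite (funerneg h).
Qed.

Lemma lam_mul (k P : R) (N : \bar R) : (k < 0)%R -> 0 <= N ->
  k%:E * (P%:E - N) = (- k)%:E * N - ((- k) * P)%:E.
Proof.
move=> k0; case: N => [N||] // _.
  by rewrite -!EFinM -!EFinB; congr (_%:E); ring.
have -> : P%:E - +oo = -oo by [].
rewrite mulrNy mulry ltr0_sg// gtr0_sg ?oppr_gt0//.
by rewrite mulN1e mul1e.
Qed.

Lemma fin01 (x : \bar R) : 0 <= x -> x <= 1 -> x \is a fin_num.
Proof.
move=> x0 x1.
by rewrite fin_numE gt_eqF ?(lt_le_trans _ x0)// lt_eqF// (le_lt_trans x1)// ltry.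
Qed.

Lemma int_le1 d (T : measurableType d) (mu : {measure set T -> \bar R}) (h : T -> R) :
  mu setT <= 1 -> measurable_fun setT h -> (forall x, 0 <= h x <= 1)%R ->
  \int[mu]_x (h x)%:E <= 1.
Proof.
move=> mu1 mh h01.
apply: (@le_trans _ _ (\int[mu]_x (cst 1 x))).
  apply: ge0_le_integral => //.
  - by move=> x _; rewrite lee_fin; case/andP: (h01 x).
  - exact/measurable_EFinP.
  - by move=> x _; rewrite lee_fin; case/andP: (h01 x).
by rewrite integral_cst// mul1e.
Qed.
End helpers.

Section core.
Context (R : realType) d1 d2 (X : measurableType d1) (Xh : measurableType d2).
Context (zeta eta : probability X R) (K : R.-pker X ~> Xh) (x0 : X).
Context (dist : X * Xh -> R) (mdist : measurable_fun setT dist).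
Context (lam : R) (lam0 : (lam < 0)%R).
Context (f : X * Xh -> R) (g : X -> R) (c : R).
Hypothesis hf : is_density (joint zeta K) (prod_marg zeta K) f.
Hypothesis hg : is_density zeta eta g.
Hypothesis hc : forall y, \int[eta]_x (expR (lam * dist (x, y)))%:E <= (expR c)%:E.
Local Notation Pm := (@Pm _ _ _ _ _ zeta K x0).
Local Notation J := (joint zeta K).
Local Notation Pi := (prod_marg zeta K).

Let mf : measurable_fun setT f. Proof. by case: hf. Qed.
Let f0 p : (0 <= f p)%R. Proof. by case: hf. Qed.
Let hfA A : measurable A -> J A = \int[Pi]_(x in A) (f x)%:E.
Proof. by case: hf => _ _; apply. Qed.
Let mg : measurable_fun setT g. Proof. by case: hg. Qed.
Let g0 x : (0 <= g x)%R. Proof. by case: hg. Qed.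
Let hgA A : measurable A -> zeta A = \int[eta]_(x in A) (g x)%:E.
Proof. by case: hg => _ _; apply. Qed.

Let mu_ : measurable_fun setT (fun p => lam * dist p)%R.
Proof. by apply: measurable_funM => //; exact: measurable_cst. Qed.
Let mL : measurable_fun setT (fun p : X * Xh => ln (g p.1)).
Proof.
exact: (measurableT_comp (@measurable_ln R) (measurableT_comp mg measurable_fst)).
Qed.

Let mF : measurable_fun setT (fun p => (expR (lam * dist p - c))%:E).
Proof.
apply/measurable_EFinP; apply: (measurableT_comp (@measurable_expR R)).
by apply: measurable_funB => //; exact: measurable_cst.
Qed.

Lemma E_le1 : \int[Pi]_p (expR (lam * dist p - c - ln (g p.1)))%:E <= 1.
Proof.
rewrite (eq_integral (fun p => (expR (- ln (g p.1)))%:E * (expR (lam * dist p - c))%:E));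
  last by move=> p _; rewrite -EFinM -expRD; congr (expR _)%:E; ring.
rewrite (@prod_marg_int _ _ _ _ _ zeta K x0); last 2 first.
- apply: emeasurable_funM => //; apply/measurable_EFinP.
  apply: (measurableT_comp (@measurable_expR R)); exact: (measurable_funN mL).
- by move=> p; rewrite mule_ge0// lee_fin expR_ge0.
have mFy x : measurable_fun setT (fun y => (expR (lam * dist (x, y) - c))%:E).
  exact: (measurable_fun_pair2 x mF).
have F0 p : 0 <= (expR (lam * dist p - c))%:E by rewrite lee_fin expR_ge0.
under eq_integral => x _.
  rewrite /= (ge0_integralZl_EFin _ _ (fun y _ => F0 (x, y)) (mFy x)) ?expR_ge0//.
  over.
set Q := fun x => \int[Pm]_y (expR (lam * dist (x, y) - c))%:E.
have mQ : measurable_fun setT Q.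
  exact: (measurable_fun_fubini_tonelli_F (fun p => (expR (lam * dist p - c))%:E) mF F0).
have Q0 x : 0 <= Q x by apply: integral_ge0 => y _.
rewrite -(@density_integral _ _ _ eta zeta g mg g0 hgA); last 2 first.
- by move=> x; apply: mule_ge0; [rewrite lee_fin expR_ge0|exact: Q0].
- apply: emeasurable_funM => //; apply/measurable_EFinP.
  apply: (measurableT_comp (@measurable_expR R)); apply: measurable_funN.
  exact: (measurableT_comp (@measurable_ln R) mg).
apply: (@le_trans _ _ (\int[eta]_x Q x)).
  apply: ge0_le_integral => //.
  - by move=> x _; apply: mule_ge0; [apply: mule_ge0; [rewrite lee_fin expR_ge0|exact: Q0]|rewrite lee_fin].
  - apply: emeasurable_funM => //; last exact/measurable_EFinP.
    apply: emeasurable_funM => //; apply/measurable_EFinP.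
    apply: (measurableT_comp (@measurable_expR R)); apply: measurable_funN.
    exact: (measurableT_comp (@measurable_ln R) mg).
  - move=> x _; rewrite muleAC -EFinM -[leRHS]mul1e -/(Q x) lee_wpmul2r ?Q0// lee_fin.
    have [gx0|gx0] := eqVneq (g x) 0%R; first by rewrite gx0 mulr0.
    have gp : (0 < g x)%R by rewrite lt_neqAle eq_sym gx0 g0.
    by rewrite expRN lnK ?posrE// mulVf.
rewrite /Q (fubini_tonelli (fun p => (expR (lam * dist p - c))%:E))//.
apply: (@le_trans _ _ (\int[Pm]_y (cst 1 y))).
  apply: ge0_le_integral => //.
  - by move=> y _; apply: integral_ge0.
  - exact: (measurable_fun_fubini_tonelli_G (fun p => (expR (lam * dist p - c))%:E) mF F0).
  - move=> y _.
    under eq_integral do rewrite expRD mulrC EFinM.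
    have mfx : measurable_fun setT (fun x => (expR (lam * dist (x, y)))%:E).
      exact/measurable_EFinP/(measurableT_comp (@measurable_expR R))/(measurable_fun_pair1 y mu_).
    rewrite (ge0_integralZl_EFin _ _ (fun x _ => _) mfx) ?expR_ge0//; last first.
      apply: (le_trans (lee_wpmul2l _ (hc y))); first by rewrite lee_fin expR_ge0.
      by rewrite -EFinM -expRD addNr expR0.
rewrite integral_cst// mul1e; exact: Pm_le1.
Qed.

Lemma int_fJ (h : X * Xh -> R) : measurable_fun setT h -> (forall p, 0 <= h p)%R ->
  \int[Pi]_p (f p * h p)%:E = \int[J]_p (h p)%:E.
Proof.
move=> mh h0; under eq_integral do rewrite EFinM muleC.
apply: (@density_integral _ _ _ Pi J f mf f0 hfA).
  by move=> p; rewrite lee_fin.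
exact/measurable_EFinP.
Qed.

Lemma int_fx (phi : X -> R) : measurable_fun setT phi -> (forall x, 0 <= phi x)%R ->
  \int[Pi]_p (f p * phi p.1)%:E = \int[eta]_x (phi x * g x)%:E.
Proof.
move=> mphi phi0.
rewrite (int_fJ (fun p => phi p.1)); last 2 first.
  exact: (measurableT_comp mphi measurable_fst).
  by move=> p.
rewrite (@joint_fst _ _ _ _ _ zeta K (fun x => (phi x)%:E)); last 2 first.
  by move=> x; rewrite lee_fin.
  exact/measurable_EFinP.
rewrite -(@density_integral _ _ _ eta zeta g mg g0 hgA); last 2 first.
  by move=> x; rewrite lee_fin.
  exact/measurable_EFinP.
by apply: eq_integral => x _; rewrite EFinM.
Qed.

Lemma int_f1 : \int[Pi]_p (f p)%:E = 1.
Proof. by rewrite -(@joint_setT _ _ _ _ _ zeta K) hfA. Qed.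

Lemma int_fk (k : R) : (0 <= k)%R -> \int[Pi]_p (f p * k)%:E = k%:E.
Proof.
move=> k0; under eq_integral do rewrite mulrC EFinM.
rewrite ge0_integralZl_EFin//; last 2 first.
  by move=> p _; rewrite lee_fin.
  exact/measurable_EFinP.
by rewrite int_f1 mule1.
Qed.

Lemma core_ineq : \int[J]_p (Num.max (dist p) 0)%:E < +oo ->
  lam%:E * exp_dist zeta K dist <=
  \int[Pi]_p (f p * ln (f p))%:E + \int[eta]_x (g x * ln (g x))%:E + c%:E.
Proof.
move=> dfin.
have mA : measurable_fun setT (fun p => f p * ln (f p))%R.
  exact: (measurable_funM mf (measurableT_comp (@measurable_ln R) mf)).
have mG : measurable_fun setT (fun x => g x * ln (g x))%R.
  exact: (measurable_funM mg (measurableT_comp (@measurable_ln R) mg)).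
have mlg : measurable_fun setT (fun x => ln (g x)).
  exact: (measurableT_comp (@measurable_ln R) mg).
have mmax (h : X * Xh -> R) : measurable_fun setT h ->
    measurable_fun setT (fun p => Num.max (h p) 0)%R.
  by move=> mh; apply: measurable_maxr => //; exact: measurable_cst.
have mmaxX (h : X -> R) : measurable_fun setT h ->
    measurable_fun setT (fun p => Num.max (h p) 0)%R.
  by move=> mh; apply: measurable_maxr => //; exact: measurable_cst.
have mfm (h : X * Xh -> R) : measurable_fun setT h ->
    measurable_fun setT (fun p => f p * Num.max (h p) 0)%R.
  by move=> mh; apply: measurable_funM => //; exact: mmax.
have mcst (k : R) : measurable_fun setT (fun _ : X * Xh => k).
  exact: measurable_cst.
have fm0 (h : X * Xh -> R) p : (0 <= f p * Num.max (h p) 0)%R.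
  by rewrite mulr_ge0// max0_ge0.
have mb5 : measurable_fun setT (fun p => expR (lam * dist p - c - ln (g p.1))).
  apply: (measurableT_comp (@measurable_expR R)); apply: measurable_funB => //.
  by apply: measurable_funB => //.
have mLHS : measurable_fun setT (fun p => f p * Num.max (lam * dist p) 0 + Num.max (- (f p * ln (f p))) 0
    + f p + f p * Num.max (- ln (g p.1)) 0 + f p * Num.max (- c) 0)%R.
  repeat apply: measurable_funD => //.
  + exact: (mfm (fun p => lam * dist p)%R).
  + exact: (mmax (fun p => - (f p * ln (f p)))%R (measurable_funN mA)).
  + exact: (mfm (fun p => - ln (g p.1))%R (measurable_funN mL)).
  + exact: (mfm (fun p => - c)%R).
have mRHS : measurable_fun setT (fun p => f p * Num.max (- (lam * dist p)) 0 + Num.max (f p * ln (f p)) 0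
    + f p * Num.max (ln (g p.1)) 0 + f p * Num.max c 0
    + expR (lam * dist p - c - ln (g p.1)))%R.
  repeat apply: measurable_funD => //.
  + exact: (mfm (fun p => - (lam * dist p))%R (measurable_funN mu_)).
  + exact: (mmax (fun p => (f p * ln (f p)))%R mA).
  + exact: (mfm (fun p => ln (g p.1))%R mL).
  + exact: (mfm (fun p => c)%R).
have H : \int[Pi]_p (f p * Num.max (lam * dist p) 0 + Num.max (- (f p * ln (f p))) 0
    + f p + f p * Num.max (- ln (g p.1)) 0 + f p * Num.max (- c) 0)%:E <=
  \int[Pi]_p (f p * Num.max (- (lam * dist p)) 0 + Num.max (f p * ln (f p)) 0
    + f p * Num.max (ln (g p.1)) 0 + f p * Num.max c 0
    + expR (lam * dist p - c - ln (g p.1)))%:E.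
  apply: ge0_le_integral => //.
  - by move=> p _; rewrite lee_fin !addr_ge0 ?mulr_ge0 ?max0_ge0 ?f0.
  - exact/measurable_EFinP.
  - exact/measurable_EFinP.
  - by move=> p _; rewrite lee_fin; exact: pw.
have mt_ (h : X * Xh -> R) : measurable_fun setT h -> measurable_fun setT h by [].
rewrite int5 in H; try (by move=> ?; rewrite ?mulr_ge0 ?max0_ge0 ?f0 ?expR_ge0);
  try (repeat first [assumption | exact: mcst | apply: mfm | apply: mmax | apply: measurable_funN]).
rewrite int5 in H; try (by move=> ?; rewrite ?mulr_ge0 ?max0_ge0 ?f0 ?expR_ge0);
  try (repeat first [assumption | exact: mcst | apply: mfm | apply: mmax | apply: measurable_funN]).
have mdp : measurable_fun setT (fun p => Num.max (dist p) 0)%R by apply: mmax.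
have mdn : measurable_fun setT (fun p => Num.max (- dist p) 0)%R.
  by apply: mmax; exact: measurable_funN.
have e1 : \int[Pi]_p (f p * Num.max (lam * dist p) 0)%:E =
    (- lam)%:E * \int[J]_p (Num.max (- dist p) 0)%:E.
  rewrite (int_fJ (fun p => Num.max (lam * dist p) 0)%R (mmax _ mu_) (fun p => max0_ge0 _ _)).
  rewrite -ge0_integralZl_EFin//; last 3 first.
    by move=> p _; rewrite lee_fin max0_ge0.
    exact/measurable_EFinP.
    by rewrite oppr_ge0 ltW.
  apply: eq_integral => p _; rewrite -EFinM; congr (_%:E); rewrite [RHS]mulrC mulmax ?oppr_ge0 ?(ltW lam0)//.
  by rewrite mulrNN.
have e1' : \int[Pi]_p (f p * Num.max (- (lam * dist p)) 0)%:E =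
    (- lam)%:E * \int[J]_p (Num.max (dist p) 0)%:E.
  rewrite (int_fJ (fun p => Num.max (- (lam * dist p)) 0)%R (mmax _ (measurable_funN mu_))
     (fun p => max0_ge0 _ _)).
  rewrite -ge0_integralZl_EFin//; last 3 first.
    by move=> p _; rewrite lee_fin max0_ge0.
    exact/measurable_EFinP.
    by rewrite oppr_ge0 ltW.
  apply: eq_integral => p _; rewrite -EFinM; congr (_%:E); rewrite [RHS]mulrC mulmax ?oppr_ge0 ?(ltW lam0)//.
  by rewrite mulNr.
have e4 : \int[Pi]_p (f p * Num.max (- ln (g p.1)) 0)%:E =
    \int[eta]_x (Num.max (- (g x * ln (g x))) 0)%:E.
  rewrite (int_fx (fun x => Num.max (- ln (g x)) 0)%R (mmaxX _ (measurable_funN mlg))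
     (fun x => max0_ge0 _ _)).
  by apply: eq_integral => x _; rewrite mulmax// mulrN.
have e4' : \int[Pi]_p (f p * Num.max (ln (g p.1)) 0)%:E =
    \int[eta]_x (Num.max (g x * ln (g x)) 0)%:E.
  rewrite (int_fx (fun x => Num.max (ln (g x)) 0)%R (mmaxX _ mlg)
     (fun x => max0_ge0 _ _)).
  by apply: eq_integral => x _; rewrite mulmax.
rewrite e1 e1' e4 e4' int_f1 !int_fk ?max0_ge0// in H.
have Dpfin : \int[J]_p (Num.max (dist p) 0)%:E \is a fin_num.
  by rewrite ge0_fin_numE// integral_ge0// => p _; rewrite lee_fin max0_ge0.
rewrite /exp_dist int_posneg -(fineK Dpfin) lam_mul//; last first.
  by apply: integral_ge0 => p _; rewrite lee_fin max0_ge0.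
rewrite -(fineK Dpfin) -EFinM in H.
rewrite (@int_posneg R _ _ Pi (fun p => f p * ln (f p))%R) (@int_posneg R _ _ eta (fun x => g x * ln (g x))%R).
have Ale1 : \int[Pi]_x (Num.max (- (f x * ln (f x))) 0)%:E <= 1.
  apply: int_le1.
  - exact: (@prod_marg_setT _ _ _ _ _ zeta K x0).
  - by apply: mmax; exact: measurable_funN.
  - move=> p; rewrite max0_ge0/=; have := @xlnx_ge R _ (f0 p).
    by rewrite /Num.max; case: ifPn => _; have := f0 p; lra.
have Gle1 : \int[eta]_x (Num.max (- (g x * ln (g x))) 0)%:E <= 1.
  apply: int_le1.
  - by rewrite le_eqVlt; apply/orP; left; apply/eqP; exact: probability_setT.
  - by apply: mmaxX; exact: measurable_funN.
  - move=> x; rewrite max0_ge0/=; have := @xlnx_ge R _ (g0 x).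
    by rewrite /Num.max; case: ifPn => _; have := g0 x; lra.
apply: (@ealg R _ _ _ _ _ _ _ c (Num.max c 0)%R (Num.max (- c) 0)%R _ _ _ _ _ _ _ _ _ H).
- by apply: mule_ge0; [rewrite lee_fin oppr_ge0 ltW|apply: integral_ge0 => p _; rewrite lee_fin max0_ge0].
- by apply: integral_ge0 => p _; rewrite lee_fin max0_ge0.
- by apply: integral_ge0 => p _; rewrite lee_fin max0_ge0.
- by apply: integral_ge0 => p _; rewrite lee_fin expR_ge0.
- exact: E_le1.
- by [].
- by apply: fin01 => //; apply: integral_ge0 => p _; rewrite lee_fin max0_ge0.
- by apply: fin01 => //; apply: integral_ge0 => p _; rewrite lee_fin max0_ge0.
- exact: maxdec.
Qed.
End core.

Lemma eln_le (R : realType) (I : \bar R) (c : R) : 0 <= I -> eln I <= c%:E ->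
  I <= (expR c)%:E.
Proof.
case: I => [r||] //= r0.
  case: ifPn => [rp|]; last first.
    rewrite -leNgt => rle _; rewrite lee_fin.
    by have -> : r = 0%R by apply/eqP; rewrite eq_le rle -lee_fin.
  rewrite !lee_fin => h.
  by rewrite -[leLHS](lnK (x:=r)) ?posrE// ler_expR.
Qed.

Theorem theorem3 (R : realType) (d1 d2 : measure_display)
    (X : measurableType d1) (Xh : measurableType d2)
    (zeta eta : probability X R) (dist : X * Xh -> R)
    (mdist : measurable_fun [set: X * Xh] dist)
    (b : \bar R) (b_gt0 : 0 < b) (r : R) (r_ge0 : (0 <= r)%R) :
  ereal_inf [set exp_dist zeta K dist
            | K in [set K : R.-pker X ~> Xh |
                    mutual_info zeta K <= r%:E /\ exp_dist_welldef zeta K dist]]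
  >= ereal_sup [set (lambda^-1)%:E * (r%:E + KL zeta eta)
                    + (lambda^-1)%:E * phi eta dist lambda
               | lambda in [set lambda : R | - b < lambda%:E /\ (lambda < 0)%R]].
Proof.
apply: ub_ereal_sup => _ [lam [_ lam0] <-].
apply: le_ereal_inf_tmp => _ [K [HI Hw] <-].
have [x0 _] : exists x : X, True.
  apply: contrapT => hX.
  have h0 : [set: X] = set0.
    by apply/seteqP; split => // x _; apply: hX; exists x.
  have := probability_setT zeta; rewrite h0 measure0 => h01.
  by have := @lte01 R; rewrite -h01 ltxx.

set E := exp_dist zeta K dist.
have mdp : measurable_fun setT (fun p => Num.max (dist p) 0)%R.
  by apply: measurable_maxr => //; exact: measurable_cst.
have [Dpinf|dfin] := eqVneq (\int[joint zeta K]_p (Num.max (dist p) 0)%:E) +oo.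
  have -> : E = +oo.
    rewrite /E /exp_dist int_posneg Dpinf.
    case: Hw => [|Hn]; first by rewrite Dpinf ltxx.
    by rewrite -(fineK (x := \int[joint zeta K]_p (Num.max (- dist p) 0)%:E)) ?ge0_fin_numE//
      integral_ge0// => p _; rewrite lee_fin max0_ge0.
  exact: leey.
have dlt : \int[joint zeta K]_p (Num.max (dist p) 0)%:E < +oo by rewrite ltey.
have Main (k' c' eps : R) : (0 < eps)%R -> KL zeta eta < k'%:E ->
    phi eta dist lam <= c'%:E -> lam%:E * E <= (r + eps + k' + c')%:E.
  move=> eps0 hk hc.
  have HIlt : mutual_info zeta K < (r + eps)%:E.
    by apply: (le_lt_trans HI); rewrite lte_fin; lra.
  have [_ [f hf <-] hI'] := ereal_inf_lt HIlt.
  have [_ [g hg <-] hD'] := ereal_inf_lt hk.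
  have hcy y : \int[eta]_x (expR (lam * dist (x, y)))%:E <= (expR c')%:E.
    apply: eln_le; first by apply: integral_ge0 => x _; rewrite lee_fin expR_ge0.
    apply: le_trans hc; apply: ereal_sup_ubound; exists y => //.
  have := @core_ineq R _ _ X Xh zeta eta K x0 dist mdist lam lam0 f g c' hf hg hcy dlt.
  move/le_trans; apply.
  by rewrite !EFinD; apply: leeD => //; apply: leeD; apply: ltW.
have li0 : (lam^-1 < 0)%R by rewrite invr_lt0.
have Einf (E' : \bar R) : (forall M : R, lam%:E * E' <= M%:E) -> E' = +oo.
  case: E' => [e||] // hM.
    have := hM (lam * e - 1)%R; rewrite -EFinM lee_fin => h; exfalso; clear -h; lra.
  by have := hM 0%R; rewrite mulrNy ltr0_sg// mulN1e /= leNgt ltry.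
have liy : (lam^-1)%:E * +oo = -oo by rewrite mulry ltr0_sg// mulN1e.
case PE : (phi eta dist lam) => [p||]; last 2 first.
- by rewrite liy addeNy leNye.
- case KLE : (KL zeta eta) => [k||].
  + suff -> : E = +oo by rewrite leey.
    apply: Einf => M.
    have := Main (k + 1)%R (M - r - 1 - (k + 1))%R 1%R ltr01.
    rewrite KLE PE lte_fin ltrDl ltr01 leNye => /(_ isT isT).
    by move/le_trans; apply; rewrite lee_fin; lra.
  + by rewrite addey// liy addNye leNye.
  + suff -> : E = +oo by rewrite leey.
    apply: Einf => M.
    have := Main (M - r - 1)%R 0%R 1%R ltr01.
    rewrite KLE PE ltNye leNye => /(_ isT isT).
    by move/le_trans; apply; rewrite lee_fin; lra.
case KLE : (KL zeta eta) => [k||].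
- have key : lam%:E * E <= (r + k + p)%:E.
    apply/lee_addgt0Pr => e e0.
    have e2 : (0 < e / 2)%R by rewrite divr_gt0.
    have := Main (k + e / 2)%R p (e / 2)%R e2.
    rewrite KLE PE lte_fin lexx.
    have -> : (k < k + e / 2)%R by rewrite ltrDl.
    move=> /(_ isT isT) /le_trans; apply.
    by rewrite -EFinD lee_fin; lra.
  move: (E) key => E'; case: E' => [e||] //.
  + rewrite -EFinM lee_fin => key.
    rewrite -EFinD lee_fin -mulrDr.
    have -> : e = (lam^-1 * (lam * e))%R by rewrite mulrA mulVf ?mul1r// lt_eqF.
    by rewrite ler_wnM2l// ltW.
  + by move=> _; exact: leey.
  + by rewrite mulrNy ltr0_sg// mulN1e /= leNgt ltry.
- by rewrite addey// liy addNye leNye.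
- suff -> : E = +oo by rewrite leey.
    apply: Einf => M.
  have := Main (M - r - 1 - p)%R p 1%R ltr01.
  rewrite KLE PE ltNye lexx => /(_ isT isT).
  by move/le_trans; apply; rewrite lee_fin; lra.
Qed.
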